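(* Let $r\ge1$ and $f:\mathbb{Z}\to\mathbb{C}$ be such that $f\circ\Delta^{(r)}\in L^1(\mathbb{P})$. Then \[\lim_{N\to\infty}\frac1N\sum_{n<N}f(\Delta^{(r)}(n))=\int_{\mathbb{X}}f(\Delta^{(r)}(x))\,d\mathbb{P}(x).\]
   Context: Fix an integer $b\ge2$. $\mathbb{X}:=\{0,\dots,b-1\}^{\mathbb{N}}$ is the space of $b$-adic integers ($x_0$ the units digit) with addition with carries extending addition on $\mathbb{N}$ ($\mathbb{N}$ embedded via base-$b$ digits); $\mathbb{P}$ is its normalized Haar measure (digits i.i.d. uniform). For $k\in\mathbb{N}$, $s_k(x):=x_0+\dots+x_k$, $\Delta_k^{(r)}(x):=s_k(x+r)-s_k(x)$, and $\Delta^{(r)}(x):=\lim_k\Delta_k^{(r)}(x)$, defined for all but finitely many $x$. For $n\in\mathbb{N}$, $\Delta^{(r)}(n)=s(n+r)-s(n)$, where $s$ is the base-$b$ sum-of-digits function. *)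

(* Defs.v *)
From HB Require Import structures.
From mathcomp Require Import all_boot all_order all_algebra.
From mathcomp Require Import all_classical all_reals all_analysis.
From mathcomp Require Import complex.

Set Implicit Arguments.
Unset Strict Implicit.
Unset Printing Implicit Defensive.

Import Order.TTheory GRing.Theory Num.Theory.
Import numFieldNormedType.Exports.

Local Open Scope classical_set_scope.
Local Open Scope ring_scope.

(* A point x is its digit sequence (x 0 = units digit).  The ambient type is
   nat -> nat; the Haar measure below is concentrated on the digit sequences
   with all digits in {0,..,b-1}, i.e. on {0,..,b-1}^N. *)
Definition digseq := nat -> nat.

Definition cyl (k : nat) (d : nat -> nat) : set digseq :=
  [set x | forall i, (i < k)%N -> x i = d i].

Definition cylinders : set (set digseq) :=
  [set A | exists k d, A = cyl k d].

Definition bX := g_sigma_algebraType cylinders.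

Definition is_haar (R : realType) (b : nat)
    (P : probability bX R) : Prop :=
  forall (k : nat) (d : nat -> nat), (forall i, (i < k)%N -> (d i < b)%N) ->
    P (cyl k d) = ((b%:R ^- k : R)%:E).

Definition trunc (b : nat) (x : digseq) (k : nat) : nat :=
  (\sum_(i < k.+1) x i * b ^ i)%N.

(* the b-adic integer x + r (addition with carries): its k-th digit is the
   k-th digit of (x mod b^(k+1)) + r *)
Definition addr_b (b r : nat) (x : digseq) : digseq :=
  fun k => (((trunc b x k + r) %/ b ^ k) %% b)%N.

Definition embed (b n : nat) : digseq := fun i => ((n %/ b ^ i) %% b)%N.

Definition s_k (x : digseq) (k : nat) : nat := (\sum_(i < k.+1) x i)%N.

Definition Delta_k (b r : nat) (x : digseq) (k : nat) : int :=
  (s_k (addr_b b r x) k)%:Z - (s_k x k)%:Z.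

(* Delta^{(r)}(x) = lim_k Delta_k^{(r)}(x) (an eventually constant integer
   sequence when the limit exists); junk value 0 where it does not exist
   (finitely many x, a P-null set). *)
Definition Delta (b r : nat) (x : digseq) : int :=
  xget 0%Z [set z : int | exists K, forall k, (K <= k)%N -> Delta_k b r x k = z].

Definition Cintegrable (R : realType) (P : probability bX R)
    (g : bX -> R[i]) : Prop :=
  P.-integrable setT (fun x => (complex.Re (g x))%:E) /\
  P.-integrable setT (fun x => (complex.Im (g x))%:E).

Definition Cintegral (R : realType) (P : probability bX R)
    (g : bX -> R[i]) : R[i] :=
  Complex (Rintegral P setT (fun x => complex.Re (g x)))
          (Rintegral P setT (fun x => complex.Im (g x))).

Definition Ccvg (R : realType) (u : nat -> R[i]) (l : R[i]) : Prop :=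
  (fun n => complex.Re (u n)) @ \oo --> complex.Re l /\
  (fun n => complex.Im (u n)) @ \oo --> complex.Im l.

(* Main.v *)
Require Import Defs.
From HB Require Import structures.
From mathcomp Require Import all_boot all_order all_algebra.
From mathcomp Require Import all_classical all_reals all_analysis.
From mathcomp Require Import measurable_realfun.
From mathcomp Require Import complex.
From mathcomp Require Import zify ring lra.
Import Order.TTheory GRing.Theory Num.Theory.
Import numFieldNormedType.Exports.
Local Open Scope classical_set_scope.
Local Open Scope ring_scope.

Section Arith.
Variables (b r : nat).
Hypothesis b1 : (1 < b)%N.
Local Open Scope nat_scope.

Lemma b0 : 0 < b. Proof. by apply: ltnW. Qed.
Lemma bX0 k : 0 < b ^ k. Proof. by rewrite expn_gt0 b0. Qed.

Lemma truncS x k : trunc b x k.+1 = trunc b x k + x k.+1 * b ^ k.+1.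
Proof. by rewrite /trunc big_ord_recr. Qed.

Lemma trunc_eq x y k : (forall i, i <= k -> x i = y i) -> trunc b x k = trunc b y k.
Proof. move=> H; rewrite /trunc; apply: eq_bigr => i _; rewrite H // -ltnS ltn_ord //. Qed.

Lemma embedE n i : embed b n i = n %% b ^ i.+1 %/ b ^ i.
Proof. by rewrite /embed modn_divl expnS. Qed.

Lemma embed_lt n i : embed b n i < b.
Proof. by rewrite ltn_pmod // b0. Qed.

Lemma trunc_embed n k : trunc b (embed b n) k = n %% b ^ k.+1.
Proof.
elim: k => [|k IH].
  by rewrite /trunc big_ord1 /embed expn0 muln1 divn1 expn1.
rewrite truncS IH embedE.
have -> : n %% b ^ k.+1 = (n %% b ^ k.+2) %% b ^ k.+1.
  by rewrite modn_dvdm // dvdn_exp2l.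
by rewrite [in RHS](divn_eq (n %% b ^ k.+2) (b ^ k.+1)) addnC.
Qed.

Lemma embed_mod n K i : i < K -> embed b n i = embed b (n %% b ^ K) i.
Proof.
move=> iK; rewrite !embedE; congr (_ %/ _).
by rewrite modn_dvdm // dvdn_exp2l.
Qed.

Lemma carry_step x j : x j.+1 < b -> trunc b x j + r < b ^ j.+1 ->
  trunc b x j.+1 + r < b ^ j.+2 /\ addr_b b r x j.+1 = x j.+1.
Proof.
move=> xb Hc; rewrite /addr_b truncS.
set B := b ^ j.+1; set c := trunc b x j.
have -> : c + x j.+1 * B + r = x j.+1 * B + (c + r) by rewrite addnAC addnC.
split.
  rewrite [b ^ j.+2]expnS -/B; apply: (@leq_trans ((x j.+1).+1 * B)).
    by rewrite mulSn addnC ltn_add2r.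
  by rewrite leq_mul2r xb orbT.
by rewrite divnMDl ?bX0 // divn_small // addn0 modn_small.
Qed.

Lemma carry_stop x k : (forall i, x i < b) -> trunc b x k + r < b ^ k.+1 ->
  forall j, k <= j -> Delta_k b r x j = Delta_k b r x k.
Proof.
move=> xb Hc; elim=> [|j IH] Hj.
  by rewrite leqn0 in Hj; move/eqP: Hj => ->.
rewrite leq_eqVlt in Hj; case/orP: Hj => [/eqP -> //|Hj].
rewrite ltnS in Hj.
have Hcj : trunc b x j + r < b ^ j.+1.
  elim: j Hj {IH} => [|j IHj] Hj.
    by rewrite leqn0 in Hj; move/eqP: Hj => <-.
  rewrite leq_eqVlt in Hj; case/orP: Hj => [/eqP <- //|Hj].
  by rewrite ltnS in Hj; case: (@carry_step x j (xb _) (IHj Hj)).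
case: (@carry_step x j (xb _) Hcj) => _ He.
rewrite -(IH Hj) /Delta_k /s_k !big_ord_recr /= He.
rewrite !PoszD; lia.
Qed.

Lemma Delta_eq x z K0 : (forall j, K0 <= j -> Delta_k b r x j = z) ->
  Delta b r x = z.
Proof.
move=> H; rewrite /Delta.
set S := [set z : int | exists K, forall k, K <= k -> Delta_k b r x k = z].
have ex : exists z, S z by exists z, K0.
have [K1 HK1] := xgetPex 0%Z ex.
by rewrite -(HK1 (maxn K0 K1)) ?leq_maxr // H // leq_maxl.
Qed.

Lemma Delta_k_loc x y k : (forall i, i <= k -> x i = y i) ->
  Delta_k b r x k = Delta_k b r y k.
Proof.
move=> H; rewrite /Delta_k /s_k.
have -> : (\sum_(i < k.+1) x i = \sum_(i < k.+1) y i)%N.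
  by apply: eq_bigr => i _; rewrite H // -ltnS.
congr (_ - _)%R; congr (Posz _); apply: eq_bigr => i _.
rewrite /addr_b (@trunc_eq x y) // => l li; apply: H.
by apply: leq_trans li _; rewrite -ltnS.
Qed.

Lemma Delta_stop x k : (forall i, x i < b) -> trunc b x k + r < b ^ k.+1 ->
  Delta b r x = Delta_k b r x k.
Proof. by move=> xb Hc; apply: (@Delta_eq _ _ k) => j; apply: carry_stop. Qed.

Lemma Delta_loc x y k : (forall i, x i < b) -> (forall i, y i < b) ->
  (forall i, i <= k -> x i = y i) -> trunc b x k + r < b ^ k.+1 ->
  Delta b r x = Delta b r y.
Proof.
move=> xb yb H Hc; rewrite (@Delta_stop x k xb Hc) (@Delta_stop y k) //.
  exact: Delta_k_loc.
by rewrite -(@trunc_eq x y k H).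
Qed.

End Arith.


Section Periodic.
Variable R : realType.
Variables (w : nat -> R) (M : nat).
Hypothesis M0 : (0 < M)%N.

Let S := \sum_(0 <= u < M) w u.
Let A := \sum_(0 <= u < M) `|w u|.

Lemma A_ge0 : 0 <= A.
Proof. by apply: sumr_ge0 => i _. Qed.

Lemma sum_small N : (N <= M)%N -> `|\sum_(0 <= n < N) w n| <= A.
Proof.
move=> NM; apply: (le_trans (ler_norm_sum _ _ _)).
rewrite /A (big_cat_nat (leq0n N) NM) /= lerDl.
by apply: sumr_ge0 => i _.
Qed.

Lemma periodic_E N : `| M%:R * \sum_(0 <= n < N) w (n %% M) - N%:R * S | <= 2 * M%:R * A.
Proof.
elim/ltn_ind: N => N IH.
case: (ltnP N M) => NM.
  have -> : \sum_(0 <= n < N) w (n %% M) = \sum_(0 <= n < N) w n.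
    rewrite !big_nat; apply: eq_bigr => i /andP[_ iN].
    by rewrite modn_small // (ltn_trans iN NM).
  apply: (le_trans (ler_normB _ _)).
  rewrite !normrM !normr_nat.
  have h1 := @sum_small N (ltnW NM).
  have h2 : `|S| <= A by apply: sum_small.
  have h3 : (N%:R : R) <= M%:R by rewrite ler_nat ltnW.
  have hA := A_ge0.
  have hN : (0 : R) <= N%:R by [].
  have hM : (0 : R) <= M%:R by [].
  nra.
rewrite (big_cat_nat (leq0n M) NM) /=.
have -> : \sum_(M <= i < N) w (i %% M) = \sum_(0 <= i < N - M) w (i %% M).
  rewrite -{1}(add0n M) big_addn; apply: eq_bigr => i _.
  by rewrite modnDr.
have -> : \sum_(0 <= i < M) w (i %% M) = S.
  rewrite /S !big_nat; apply: eq_bigr => i /andP[_ iM].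
  by rewrite modn_small.
have hNM : (N - M < N)%N by rewrite ltn_subrL M0 (leq_trans M0 NM).
have := IH _ hNM.
have -> : (N%:R : R) = (N - M)%:R + M%:R by rewrite -natrD subnK.
set T := \sum_(0 <= i < N - M) w (i %% M).
by have -> : M%:R * (S + T) - ((N - M)%:R + M%:R) * S = M%:R * T - (N - M)%:R * S by ring.
Qed.

Lemma periodic_avg N : (0 < N)%N ->
  `| N%:R^-1 * \sum_(0 <= n < N) w (n %% M) - M%:R^-1 * S | <= 2 * A / N%:R.
Proof.
move=> N0.
have hN : (0 : R) < N%:R by rewrite ltr0n.
have hM : (0 : R) < M%:R by rewrite ltr0n.
have E := periodic_E N.
set T := \sum_(0 <= n < N) w (n %% M) in E *.
have -> : N%:R^-1 * T - M%:R^-1 * S = (M%:R * T - N%:R * S) / (N%:R * M%:R).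
  by field; apply/andP; split; rewrite lt0r_neq0.
rewrite normrM normfV (gtr0_norm (mulr_gt0 hN hM)).
rewrite ler_pdivrMr ?mulr_gt0 //.
apply: (le_trans E).
have -> : 2 * A / N%:R * (N%:R * M%:R) = 2 * M%:R * A.
  by field; rewrite lt0r_neq0.
by [].
Qed.

End Periodic.


Section Cyl.
Variable R : realType.
Variables (b : nat) (P : probability bX R).
Hypothesis b1 : (1 < b)%N.
Hypothesis HP : is_haar b P.

Definition M k := (b ^ k.+1)%N.
Definition cylk k u : set bX := cyl k.+1 (embed b u).
Definition Cov k : set bX := \bigcup_(u < M k) cylk k u.
Definition Good : set bX := \bigcap_k Cov k.

Lemma M0 k : (0 < M k)%N. Proof. exact: bX0. Qed.

Lemma mcylk k u : measurable (cylk k u).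
Proof. by apply: sub_sigma_algebra; exists k.+1, (embed b u). Qed.

Lemma mCov k : measurable (Cov k).
Proof. by rewrite /Cov bigcup_mkord; apply: bigsetU_measurable => i _; exact: mcylk. Qed.

Lemma mGood : measurable Good.
Proof. by apply: bigcapT_measurable => k; exact: mCov. Qed.

Lemma Pcylk k u : P (cylk k u) = ((b%:R ^- k.+1 : R)%:E).
Proof. by rewrite /cylk HP // => i _; exact: embed_lt. Qed.

Lemma cylk_trunc k u x : cylk k u x -> trunc b x k = (u %% M k)%N.
Proof.
move=> Hx; rewrite -trunc_embed //; apply: trunc_eq => i ik.
by apply: Hx; rewrite ltnS.
Qed.

Lemma cylk_disj k u v x : (u < M k)%N -> (v < M k)%N -> cylk k u x -> cylk k v x -> u = v.
Proof.
move=> uM vM Hu Hv.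
by rewrite -(modn_small uM) -(modn_small vM) -(@cylk_trunc k u x Hu) -(@cylk_trunc k v x Hv).
Qed.

Lemma trivI_cylk k : trivIset [set: 'I_(M k)] (fun u => cylk k u).
Proof.
move=> i j _ _ [x [Hi Hj]]; apply: val_inj => /=.
exact: (@cylk_disj k i j x).
Qed.

Lemma PCov k : P (Cov k) = 1%E.
Proof.
rewrite /Cov bigcup_mkord (@measure_bigsetU_ord _ _ _ P (M k) xpredT (fun u => cylk k u)).
- rewrite (eq_bigr (fun _ => ((b%:R ^- k.+1 : R)%:E))); last first.
    by move=> i _; apply: Pcylk.
  rewrite sumEFin sumr_const card_ord /M.
  have -> : (b%:R ^- k.+1 *+ (b ^ k.+1)%N : R) = b%:R ^- k.+1 * (b%:R ^+ k.+1).
    by rewrite -natrX mulr_natr.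
  congr (_%:E); rewrite mulVf // expf_neq0 // pnatr_eq0 -lt0n.
  exact: (ltn_trans _ b1).
- by move=> i; exact: mcylk.
- exact: trivI_cylk.
Qed.

Lemma PCovC k : P (~` Cov k) = 0%E.
Proof. by rewrite (probability_setC _ (mCov k)) PCov subee. Qed.

Lemma PGoodC : P (~` Good) = 0%E.
Proof.
apply/negligibleP; first by apply: measurableC; exact: mGood.
rewrite /Good setC_bigcap; apply: negligible_bigcup => k.
by apply/negligibleP; [apply: measurableC; exact: mCov | exact: PCovC].
Qed.

Lemma Good_cover k x : Good x -> exists2 u, (u < M k)%N & cylk k u x.
Proof. by move=> /(_ k I) [u uM Hx]; exists u. Qed.

Lemma Good_digit x i : Good x -> (x i < b)%N.
Proof.
move=> /(Good_cover i) [u _ Hx]; rewrite (Hx i (ltnSn i)).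
exact: embed_lt.
Qed.

Lemma cylk_embed k n : cylk k (n %% M k) (embed b n).
Proof. by move=> i ik; rewrite /M -embed_mod. Qed.

Lemma Good_embed n : Good (embed b n).
Proof.
move=> k _; exists (n %% M k)%N; first by rewrite /= ltn_pmod // M0.
exact: cylk_embed.
Qed.

Lemma RintG (F : bX -> R) : P.-integrable setT (EFin \o F) ->
  Rintegral P setT F = Rintegral P Good F.
Proof.
move=> HF.
have mGC : measurable (~` Good) by apply: measurableC; exact: mGood.
rewrite -(setUv Good) Rintegral_setU //; last 3 first.
- exact: mGood.
- by rewrite setUv.
- by apply/disj_setPCl.
rewrite /Rintegral [X in _ + fine X]null_set_integral //; first by rewrite addr0.
- by apply: (measurable_funS measurableT) => //; exact: (measurable_int P HF).
- exact: PGoodC.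
Qed.

Definition cf k (v : nat -> R) (x : bX) : R :=
  \sum_(u < M k) v u * \1_(cylk k u) x.

Lemma cf_good k v x u : (u < M k)%N -> cylk k u x -> cf k v x = v u.
Proof.
move=> uM Hx; rewrite /cf (bigD1 (Ordinal uM)) //= big1 ?addr0.
  by rewrite indicE mem_set // mulr1.
move=> j /eqP jn; rewrite indicE.
case: (boolP (x \in cylk k j)) => [/set_mem Hj|]; last by rewrite mulr0.
exfalso; apply: jn; apply: val_inj => /=.
exact: (@cylk_disj k j u x).
Qed.

Lemma cfE k v x : (cf k v x)%:E =
  (\sum_(u < M k) (v u)%:E * (\1_(cylk k u) x)%:E)%E.
Proof. by rewrite /cf -sumEFin; apply: eq_bigr => u _; rewrite EFinM. Qed.

Lemma cf_int k v : P.-integrable setT (EFin \o cf k v).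
Proof.
apply: (eq_integrable measurableT (fun x => (\sum_(u < M k) (v u)%:E * (\1_(cylk k u) x)%:E)%E)).
  by move=> x _; rewrite /= cfE.
apply: (integrable_sum measurableT) => u _.
apply: (integrableZl measurableT); apply: integrable_indic; exact: mcylk.
Qed.

Lemma cf_Rint k v : Rintegral P setT (cf k v) = (M k)%:R^-1 * \sum_(u < M k) v u.
Proof.
rewrite /Rintegral.
under eq_integral do rewrite cfE.
rewrite (integral_sum measurableT); last first.
  move=> u; apply: (integrableZl measurableT); apply: integrable_indic; exact: mcylk.
rewrite (eq_bigr (fun u : 'I_(M k) => ((v u) * b%:R ^- k.+1)%:E)); last first.
  move=> u _; rewrite (integralZl measurableT); last by apply: integrable_indic; exact: mcylk.
  rewrite integral_indic; last exact: mcylk.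
  rewrite EFinM setIT; congr (_ * _)%E; exact: Pcylk.
  by [].
rewrite sumEFin /= mulr_sumr; apply: eq_bigr => u _.
by rewrite mulrC /M natrX.
Qed.

End Cyl.


Section Main.
Variable R : realType.
Variables (b : nat) (P : probability bX R) (r : nat) (h : int -> R).
Hypothesis b1 : (1 < b)%N.
Hypothesis HP : is_haar b P.
Let G (x : bX) : R := h (Delta b r x).
Hypothesis HG : P.-integrable setT (EFin \o G).

Definition Ak k : set bX :=
  \bigcup_(u < M b k) (if (u + r < M b k)%N then cylk b k u else set0).
Definition w k (u : nat) : R :=
  if (u + r < M b k)%N then h (Delta b r (embed b u)) else 0.
Definition Tl k (x : bX) : R := G x * \1_(~` Ak k) x.

Lemma mAk k : measurable (Ak k).
Proof.
rewrite /Ak bigcup_mkord; apply: bigsetU_measurable => i _.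
by case: ifP => _ //; exact: mcylk.
Qed.

Lemma cylk_loc k u x y : (forall i, (i <= k)%N -> x i = y i) ->
  cylk b k u x -> cylk b k u y.
Proof. by move=> H Hx i ik; rewrite -H ?Hx // -ltnS. Qed.

Lemma Ak_loc k x y : (forall i, (i <= k)%N -> x i = y i) -> Ak k x -> Ak k y.
Proof.
move=> H [u uM Hx]; exists u => //; move: Hx; case: ifP => // _.
exact: cylk_loc.
Qed.

Lemma Ak_char k u x : (u < M b k)%N -> cylk b k u x ->
  (Ak k x <-> (u + r < M b k)%N).
Proof.
move=> uM Hx; split.
  move=> [u' u'M]; case: ifP => [Hu' Hx'|_ //].
  by rewrite -(@cylk_disj b k u' u x).
by move=> Hu; exists u => //; rewrite Hu.
Qed.

Lemma G_dec k u x : (forall i, (x i < b)%N) -> (u < M b k)%N -> cylk b k u x ->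
  G x = w k u + Tl k x.
Proof.
move=> xb uM Hx; rewrite /Tl /w indicE.
case: ifP => Hu.
  have Ax : Ak k x by apply/(@Ak_char k u x uM Hx).
  rewrite (_ : x \in ~` Ak k = false); last first.
    by apply/negbTE/negP => /set_mem; apply.
  rewrite mulr0 addr0 /G; congr h.
  have yb : forall i, (embed b u i < b)%N by move=> i; exact: embed_lt.
  have agr : forall i, (i <= k)%N -> x i = embed b u i.
    by move=> i ik; apply: Hx; rewrite ltnS.
  have tr : (trunc b x k + r < b ^ k.+1)%N.
    by rewrite (@cylk_trunc b k u x Hx) modn_small.
  exact: (@Delta_loc b r b1 x (embed b u) k xb yb agr tr).
have nAx : ~ Ak k x by move/(@Ak_char k u x uM Hx); rewrite Hu.
by rewrite mem_set // mulr1 add0r.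
Qed.

Lemma seq_dec k n : G (embed b n) = w k (n %% M b k) + Tl k (embed b n).
Proof.
apply: G_dec; first by move=> i; exact: embed_lt.
  by rewrite ltn_pmod // M0.
exact: cylk_embed.
Qed.

Let RG F := @RintG R b P b1 HP F.

Lemma mG : measurable_fun setT G.
Proof. by apply/measurable_EFinP; exact: (measurable_int P HG). Qed.

Lemma mTl k : measurable_fun setT (Tl k).
Proof.
apply: measurable_funM; first exact: mG.
apply: measurable_indic; apply: measurableC; exact: mAk.
Qed.

Lemma Tl_le k x : `|Tl k x| <= `|G x|.
Proof.
by rewrite /Tl indicE; case: (x \in _); rewrite ?mulr1 ?mulr0 ?normr0 ?normr_ge0.
Qed.

Lemma Tl_int k : P.-integrable setT (EFin \o Tl k).
Proof.
apply: (@le_integrable _ _ _ P setT measurableT (EFin \o Tl k) (EFin \o G)) => //.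
  by apply/measurable_EFinP; exact: mTl.
by move=> x _ /=; rewrite lee_fin Tl_le.
Qed.

Lemma int_dec k : Rintegral P setT G =
  (M b k)%:R^-1 * \sum_(u < M b k) w k u + Rintegral P setT (Tl k).
Proof.
have Hsum : P.-integrable setT (EFin \o (fun x => cf R b k (w k) x + Tl k x)).
  apply: (eq_integrable measurableT ((EFin \o cf R b k (w k)) \+ (EFin \o Tl k))%E).
    by move=> x _ /=; rewrite EFinD.
  apply: (integrableD measurableT); [exact: cf_int | exact: Tl_int].
rewrite (RG _ HG) (@eq_Rintegral _ _ _ P (Good b) (fun x => cf R b k (w k) x + Tl k x)).
  rewrite -(RG _ Hsum) RintegralD //; [|exact: cf_int|exact: Tl_int].
  by rewrite cf_Rint.
move=> x /set_mem Gx.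
have [u uM Hx] := @Good_cover b k x Gx.
rewrite (@cf_good R b k (w k) x u uM Hx).
apply: (@G_dec k u x) => // i; exact: (@Good_digit b b1 x i Gx).
Qed.

Lemma absTl_int k : P.-integrable setT (EFin \o (fun x => `|Tl k x|)).
Proof. exact: (integrable_norm (Tl_int k)). Qed.

Lemma tail_bound k N : (0 < N)%N -> (r <= N)%N -> (M b k <= N + r)%N ->
  \sum_(n < N) `|Tl k (embed b n)| <=
  2 * b%:R * N%:R * Rintegral P setT (fun x => `|Tl k x|).
Proof.
move=> N0 rN kN.
set J := trunc_log b (N + r).
have NJ : (N + r < M b J)%N by exact: trunc_log_ltn.
have bJ : (b ^ J <= N + r)%N by apply: trunc_logP => //; rewrite addn_gt0 N0.
have kJ : (k < J)%N by apply: trunc_log_max.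
set v := fun u => if (u + r < M b J)%N then `|Tl k (embed b u)| else 0.
have v0 u : 0 <= v u by rewrite /v; case: ifP.
have Hle : Rintegral P setT (cf R b J v) <= Rintegral P setT (fun x => `|Tl k x|).
  rewrite (RG _ (cf_int R b P J v)) (RG _ (absTl_int k)).
  apply: le_Rintegral; first exact: mGood.
  - by apply: (integrableS measurableT) => //; [exact: mGood | exact: cf_int].
  - by apply: (integrableS measurableT) => //; [exact: mGood | exact: absTl_int].
  move=> x Gx; have [u0 u0M Hx] := @Good_cover b J x Gx.
  have := @cf_good R b J v x u0 u0M Hx; rewrite /cf => ->; rewrite /v; case: ifP => Hu //.
  have agr : forall i, (i <= J)%N -> x i = embed b u0 i.
    by move=> i iJ; apply: Hx; rewrite ltnS.
  have agrk : forall i, (i <= k)%N -> x i = embed b u0 i.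
    by move=> i ik; apply: agr; apply: (leq_trans ik); apply: ltnW.
  have agrk' : forall i, (i <= k)%N -> embed b u0 i = x i.
    by move=> i ik; rewrite agrk.
  have xb : forall i, (x i < b)%N by move=> i; exact: (@Good_digit b b1 x i Gx).
  have yb : forall i, (embed b u0 i < b)%N by move=> i; exact: embed_lt.
  have tr : (trunc b x J + r < b ^ J.+1)%N.
    by rewrite (@cylk_trunc b J u0 x Hx) modn_small.
  have eD := @Delta_loc b r b1 x (embed b u0) J xb yb agr tr.
  rewrite /Tl /G eD !indicE.
  have -> : (x \in ~` Ak k) = (embed b u0 \in ~` Ak k).
    apply/idP/idP => /set_mem H; apply/mem_set => H'; apply: H.
    - exact: (@Ak_loc k _ _ agrk' H').
    - exact: (@Ak_loc k _ _ agrk H').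
  by [].
rewrite (@cf_Rint R b P b1 HP) in Hle.
have MJ0 : (0 : R) < (M b J)%:R by rewrite ltr0n M0.
have HS : \sum_(u < M b J) v u <= (M b J)%:R * Rintegral P setT (fun x => `|Tl k x|).
  by rewrite -ler_pdivrMl.
have Hsum : \sum_(n < N) `|Tl k (embed b n)| <= \sum_(u < M b J) v u.
  rewrite -(big_mkord xpredT v) -(big_mkord xpredT (fun n => `|Tl k (embed b n)|)).
  have NMJ : (N <= M b J)%N by apply: ltnW; apply: leq_ltn_trans NJ; exact: leq_addr.
  rewrite (big_cat_nat (leq0n N) NMJ) /=.
  apply: ler_wpDr; first by apply: sumr_ge0 => i _.
  rewrite le_eqVlt; apply/orP; left; apply/eqP.
  rewrite !big_nat; apply: eq_bigr => i /andP[_ iN].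
  rewrite /v ifT //; apply: leq_ltn_trans NJ; by rewrite leq_add2r ltnW.
have I0 : 0 <= Rintegral P setT (fun x => `|Tl k x|).
  by apply: Rintegral_ge0 => x _.
apply: (le_trans Hsum); apply: (le_trans HS).
apply: ler_wpM2r => //.
have -> : ((M b J)%:R : R) = b%:R * (b ^ J)%:R by rewrite /M expnS natrM.
have h1 : ((b ^ J)%:R : R) <= (N + r)%:R by rewrite ler_nat.
have h2 : ((N + r)%:R : R) <= 2 * N%:R.
  by rewrite natrD mulr2n mulrDl mul1r lerD2l ler_nat.
have hb : (0 : R) <= b%:R by [].
have hbJ : (0 : R) <= (b ^ J)%:R by [].
nra.
Qed.

Definition Bad k : set bX :=
  \bigcup_(u < M b k) (if (u + r < M b k)%N then set0 else cylk b k u).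

Lemma count_le (c : R) (m : nat) : 0 <= c ->
  \sum_(u < m) (if (u + r < m)%N then 0 else c) <= r%:R * c.
Proof.
move=> c0.
rewrite -(big_mkord xpredT (fun u => if (u + r < m)%N then 0 else c)).
rewrite (big_cat_nat (leq0n (m - r)) (leq_subr r m)) /=.
rewrite big_nat big1 ?add0r; last first.
  by move=> i /andP[_ Hi]; rewrite ifT //; lia.
apply: (@le_trans _ _ (\sum_(m - r <= i < m) c)).
  by apply: ler_sum => i _; case: ifP.
rewrite sumr_const_nat -[c *+ _]mulr_natl; apply: ler_wpM2r => //; rewrite ler_nat; lia.
Qed.

Lemma PBad k : (P (Bad k) <= (r%:R * b%:R ^- k.+1)%:E)%E.
Proof.
have mF : forall i : 'I_(M b k),
    measurable (if (i + r < M b k)%N then set0 else cylk b k i).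
  by move=> i; case: ifP => _ //; exact: mcylk.
rewrite /Bad bigcup_mkord (@measure_bigsetU_ord _ _ _ P (M b k) xpredT
  (fun i : 'I_(M b k) => if (i + r < M b k)%N then set0 else cylk b k i) mF).
- rewrite (eq_bigr (fun i : 'I_(M b k) =>
     (if (i + r < M b k)%N then 0 else b%:R ^- k.+1)%:E)); last first.
    move=> i _; case: ifP => _; first by rewrite measure0.
    exact: Pcylk.
  rewrite sumEFin lee_fin; apply: count_le.
  by rewrite invr_ge0 exprn_ge0.
- move=> i j _ _ [x [Hi Hj]]; apply: val_inj => /=.
  move: Hi Hj; case: ifP => _ // Hi; case: ifP => _ // Hj.
  exact: (@cylk_disj b k i j x).
Qed.

Definition Cset : set bX := \bigcap_k ~` Ak k.

Lemma mCset : measurable Cset.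
Proof. by apply: bigcapT_measurable => k; apply: measurableC; exact: mAk. Qed.

Lemma GC_Bad k : Good b `&` Cset `<=` Bad k.
Proof.
move=> x [Gx Cx]; have [u uM Hx] := @Good_cover b k x Gx.
exists u => //; case: ifP => // Hu.
exfalso; apply: (Cx k I); exists u => //; by rewrite Hu.
Qed.

Lemma PGC : P (Good b `&` Cset) = 0%E.
Proof.
have mGC : measurable (Good b `&` Cset) by apply: measurableI; [exact: mGood|exact: mCset].
apply/eqP; rewrite eq_le measure_ge0 andbT.
apply/lee_addgt0Pr => e e0; rewrite add0e.
set K := Num.Def.archi_bound (r%:R / e).
have HK : r%:R / e < K%:R by apply: archi_boundP; rewrite divr_ge0 // ltW.
apply: (@le_trans _ _ (P (Bad K))).
  apply: le_measure; rewrite ?inE //; last exact: GC_Bad.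
  rewrite /Bad bigcup_mkord; apply: bigsetU_measurable => i _.
  by case: ifP => _ //; exact: mcylk.
apply: (le_trans (PBad K)); rewrite lee_fin.
have bK : (K.+1 < b ^ K.+1)%N by apply: ltn_expl.
have bKR : (K%:R : R) < (b%:R ^+ K.+1) by rewrite -natrX ltr_nat; lia.
have bpos : (0 : R) < b%:R ^+ K.+1 by rewrite exprn_gt0 // ltr0n; lia.
rewrite ler_pdivrMr // -ler_pdivrMl //.
by rewrite mulrC ltW // (lt_trans HK).
Qed.

Lemma Ak_mono k x : Good b x -> Ak k x -> Ak k.+1 x.
Proof.
move=> Gx [u uM]; case: ifP => // Hu Hx.
have [u' u'M Hx'] := @Good_cover b k.+1 x Gx.
exists u' => //; rewrite ifT //.
have t1 := @cylk_trunc b k u x Hx; rewrite modn_small // in t1.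
have t2 := @cylk_trunc b k.+1 u' x Hx'; rewrite modn_small // in t2.
have hc : (trunc b x k + r < b ^ k.+1)%N by rewrite t1.
have [c _] := @carry_step b r b1 x k (@Good_digit b b1 x k.+1 Gx) hc.
by rewrite -t2.
Qed.

Lemma Ak_monoN k x : Good b x -> Ak k x -> forall j, (k <= j)%N -> Ak j x.
Proof.
move=> Gx Ax; elim=> [|j IH] kj.
  by rewrite leqn0 in kj; move/eqP: kj => <-.
rewrite leq_eqVlt in kj; case/orP: kj => [/eqP <- //|kj].
by apply: Ak_mono => //; apply: IH.
Qed.

Lemma tail_lim e : 0 < e -> exists k, Rintegral P setT (fun x => `|Tl k x|) < e.
Proof.
move=> e0.
have mf_ : forall n, measurable_fun setT (EFin \o (fun x => `|Tl n x|)).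
  by move=> n; exact: (measurable_int P (absTl_int n)).
have ff : {ae P, forall x, setT x ->
   (fun n => (EFin \o (fun x => `|Tl n x|)) x) @ \oo --> (cst 0%E : bX -> \bar R) x}.
  have N1 : P.-negligible (~` Good b).
    apply/negligibleP; first by apply: measurableC; exact: mGood.
    exact: (@PGoodC R b P b1 HP).
  have N2 : P.-negligible (Good b `&` Cset).
    apply/negligibleP; first by apply: measurableI; [exact: mGood | exact: mCset].
    exact: PGC.
  apply: (negligibleS _ (negligibleU N1 N2)).
  move=> x /= nH.
  case: (pselect (Good b x)) => Gx; last by left.
  right; split => //.
  move=> k _ Ak0; apply: nH => _.
  apply: cvg_near_cst; near=> n.
  have Axn : Ak n x by apply: (@Ak_monoN k x Gx Ak0); near: n; exact: nbhs_infty_ge.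
  by rewrite /= /Tl indicE (_ : x \in ~` Ak n = false) ?mulr0 ?normr0 //;
     apply/negbTE/negP => /set_mem; apply.
have ig : P.-integrable setT (EFin \o (fun x => `|G x|)) by exact: integrable_norm HG.
pose fn : nat -> bX -> \bar R := fun n x => (`|Tl n x|)%:E.
pose gg : bX -> \bar R := fun x => (`|G x|)%:E.
have fg : {ae P, forall x n, setT x -> (`|fn n x| <= gg x)%E}.
  by apply: aeW => x n _; rewrite /fn /gg abse_EFin normr_id lee_fin Tl_le.
have [_ _ H] := @dominated_convergence _ _ _ P setT measurableT
  (fun n => EFin \o (fun x => `|Tl n x|)) (cst 0%E) (EFin \o (fun x => `|G x|))
  mf_ (measurable_cst _) ff ig fg.
rewrite integral0 in H.
move/fine_cvgP: H => [_ H].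
have := cvgr_lt _ H _ e0.
case=> k0 _ Hk0; exists k0; exact: (Hk0 k0 (leqnn k0)).
Unshelve. all: by end_near.
Qed.

Lemma eqle (x y : R) : x = y -> x <= y. Proof. by move->. Qed.

Lemma core : (fun N : nat => (N%:R^-1 * \sum_(n < N) G (embed b n) : R)) @ \oo -->
  (Rintegral P setT G : R).
Proof.
apply/cvgrPdist_le => e e0.
have b0 : (0 : R) <= b%:R by [].
set d := e / (2 * (2 * b%:R + 1)).
have d0 : 0 < d by rewrite divr_gt0 // mulr_gt0 // ltr_wpDl // mulr_ge0.
have [k Hk] := @tail_lim d d0.
set T := Rintegral P setT (fun x => `|Tl k x|) in Hk.
have T0 : 0 <= T by apply: Rintegral_ge0.
set A := \sum_(0 <= u < M b k) `|w k u|.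
have A0 : 0 <= A by apply: sumr_ge0.
near=> N.
have N0 : (0 < N)%N by near: N; exact: nbhs_infty_gt.
have rN : (r <= N)%N by near: N; exact: nbhs_infty_ge.
have MN : (M b k <= N)%N by near: N; exact: nbhs_infty_ge.
have HN : 4 * A / e < N%:R by near: N; exact: nbhs_infty_gtr.
have NR : (0 : R) < N%:R by rewrite ltr0n.
have Hsplit : \sum_(n < N) G (embed b n) =
    \sum_(n < N) w k (n %% M b k) + \sum_(n < N) Tl k (embed b n).
  by rewrite -big_split /=; apply: eq_bigr => n _; exact: seq_dec.
rewrite (int_dec k) Hsplit mulrDr.
set Sw := \sum_(n < N) w k (n %% M b k).
set St := \sum_(n < N) Tl k (embed b n).
set Wm := (M b k)%:R^-1 * \sum_(u < M b k) w k u.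
set It := Rintegral P setT (Tl k).
have P1 : `| N%:R^-1 * Sw - Wm | <= 2 * A / N%:R.
  have := @periodic_avg R (w k) (M b k) (@M0 b b1 k) N N0.
  move=> H; rewrite /Sw /Wm -(big_mkord xpredT (fun n => w k (n %% M b k))).
  by rewrite -(big_mkord xpredT (w k)).
have P2 : `| N%:R^-1 * St | <= 2 * b%:R * T.
  rewrite normrM normfV normr_nat ler_pdivrMl //.
  apply: (le_trans (ler_norm_sum _ _ _)).
  apply: (le_trans (@tail_bound k N N0 rN _)); first by apply: (leq_trans MN); exact: leq_addr.
  by rewrite -/T; apply: eqle; ring.
have P3 : `| It | <= T.
  apply: le_normr_Rintegral => //; exact: Tl_int.
have P4 : 2 * A / N%:R <= e / 2.
  have hh : 4 * A <= N%:R * e by rewrite -ler_pdivrMr //; apply: ltW.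
  rewrite ler_pdivrMr //.
  have -> : e / 2 * N%:R = (N%:R * e) / 2 by field.
  lra.
have Hd : (2 * b%:R + 1) * T <= e / 2.
  have : (2 * b%:R + 1) * T <= (2 * b%:R + 1) * d.
    by apply: ler_wpM2l; [rewrite addr_ge0 // mulr_ge0 | exact: ltW].
  move=> h1; apply: (le_trans h1); apply: eqle.
  rewrite /d; field; rewrite lt0r_neq0 // ltr_wpDl // mulr_ge0.
have -> : Wm + It - (N%:R^-1 * Sw + N%:R^-1 * St) =
   - (N%:R^-1 * Sw - Wm) - N%:R^-1 * St + It by ring.
apply: (le_trans (ler_normD _ _)); apply: (le_trans (lerD (ler_normB _ _) (lexx _))).
rewrite normrN.
have := lerD (lerD P1 P2) P3.
move=> h2; apply: (le_trans h2).
have : 2 * A / N%:R + 2 * b%:R * T + T <= e / 2 + e / 2.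
  have -> : 2 * A / N%:R + 2 * b%:R * T + T = 2 * A / N%:R + (2 * b%:R + 1) * T by ring.
  exact: lerD.
by move=> h3; apply: (le_trans h3); apply: eqle; field.
Unshelve. all: by end_near.
Qed.

End Main.


Section Cplx.
Variable R : realType.
Local Open Scope complex_scope.
Lemma ReD (x y : R[i]) : complex.Re (x + y) = complex.Re x + complex.Re y.
Proof. by case: x; case: y. Qed.
Lemma ImD (x y : R[i]) : complex.Im (x + y) = complex.Im x + complex.Im y.
Proof. by case: x; case: y. Qed.
Lemma Re_sum (I : Type) (s : seq I) (F : I -> R[i]) :
  complex.Re (\sum_(i <- s) F i) = \sum_(i <- s) complex.Re (F i).
Proof. by apply: (big_morph _ ReD). Qed.
Lemma Im_sum (I : Type) (s : seq I) (F : I -> R[i]) :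
  complex.Im (\sum_(i <- s) F i) = \sum_(i <- s) complex.Im (F i).
Proof. by apply: (big_morph _ ImD). Qed.
Lemma natC (N : nat) : (N%:R : R[i])^-1 = ((N%:R : R)^-1)%:C.
Proof. by rewrite -(rmorph_nat (real_complex R)) fmorphV. Qed.
Lemma ReMC (a : R) (z : R[i]) : complex.Re (a%:C * z) = a * complex.Re z.
Proof. by case: z => x y /=; rewrite mul0r subr0. Qed.
Lemma ImMC (a : R) (z : R[i]) : complex.Im (a%:C * z) = a * complex.Im z.
Proof. by case: z => x y /=; rewrite mul0r addr0. Qed.
End Cplx.

Theorem mainTheorem7 (R : realType) (b : nat) (P : probability bX R)
    (r : nat) (f : int -> R[i]) :
  (2 <= b)%N -> is_haar b P -> (1 <= r)%N ->
  Cintegrable P (fun x => f (Delta b r x)) ->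
  Ccvg (fun N : nat => N%:R^-1 * \sum_(n < N) f (Delta b r (embed b n)))
       (Cintegral P (fun x => f (Delta b r x))).
Proof.
move=> b1 HP _ [HRe HIm]; split => /=.
- under eq_fun do rewrite natC ReMC Re_sum.
  exact: (@core R b P r (fun z => complex.Re (f z)) b1 HP HRe).
- under eq_fun do rewrite natC ImMC Im_sum.
  exact: (@core R b P r (fun z => complex.Im (f z)) b1 HP HIm).
Qed.
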